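(* Let $\Phi$ be a second-order constraint problem with model $(J,\xi)$. Then there exists a second-order substitution $\xi_r$ such that $(J,\xi_r)$ is a model of $\Phi$ and $\mathrm{Var}(\xi_r(\alpha))\subseteq\mathrm{SV}(\alpha)$ for every second-order variable $\alpha$ occurring in $\Phi$.
   Context: Index terms over index variables $i$ and index symbols $g$ (including $0,\mathsf s,+$); an interpretation $J$ maps each $k$-ary $g$ to a total weakly monotone function $\mathbb N^k\to\mathbb N$ ($0,\mathsf s,+$ as zero, successor, addition); $a\le_J b$ iff $[a]^\beta_J\le[b]^\beta_J$ for every assignment $\beta$ of naturals to index variables. Second-order index terms: $a::=i\mid\alpha\mid g(a_1,\dots,a_{\mathrm{ar}(g)})$ where $\alpha$ ranges over a countably infinite set of second-order index variables; $\mathrm{Var}(a)$ is the set of (first-order) index variables and $\mathrm{SOVar}(a)$ the set of second-order variables of $a$. A second-order constraint problem (SOCP) $\Phi$ is a set of inequality constraints $a\le b$ (second-order index terms) and occurrence constraints $i\notin\alpha$. A second-order substitution $\xi$ maps second-order variables to index terms containing no second-order variables. $(J,\xi)$ is a model of $\Phi$ if $a\xi\le_J b\xi$ for every inequality $a\le b\in\Phi$ and $i\notin\mathrm{Var}(\xi(\alpha))$ for every occurrence constraint $i\notin\alpha\in\Phi$. Skolem variables: for the second-order variables $\beta$ of $\Phi$, let $V(\beta)$ be the least sets of index variables such that for every $(a\le b)\in\Phi$ with $\beta\in\mathrm{SOVar}(b)$: $\mathrm{Var}(a)\subseteq V(\beta)$, and $V(\alpha)\subseteq V(\beta)$ for every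 $\alpha\in\mathrm{SOVar}(a)$. Then $\mathrm{SV}(\beta)=V(\beta)\setminus\{i\mid(i\notin\beta)\in\Phi\}$. *)

(* Defs.v *)
From Stdlib Require List.
From mathcomp Require Import all_boot.
Set Implicit Arguments. Unset Strict Implicit. Unset Printing Implicit Defensive.

(* The built-in symbols 0, s, +
   have dedicated constructors; every other index symbol is named by a nat g
   and applied to a list of arguments (its arity is given by a signature
   ar : nat -> nat, see [wf]). *)
Inductive iterm : Type :=
| IVar  of nat
| ISO   of nat
| IZero
| ISucc of iterm
| IPlus of iterm & iterm
| IFun  of nat & seq iterm.

Fixpoint wf (ar : nat -> nat) (t : iterm) : bool :=
  match t with
  | IVar _ | ISO _ | IZero => true
  | ISucc a => wf ar a
  | IPlus a b => wf ar a && wf ar b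
  | IFun g ts => (size ts == ar g) && all (wf ar) ts
  end.

Fixpoint hasVar (i : nat) (t : iterm) : bool :=
  match t with
  | IVar j => j == i
  | ISO _ | IZero => false
  | ISucc a => hasVar i a
  | IPlus a b => hasVar i a || hasVar i b
  | IFun _ ts => has (hasVar i) ts
  end.

Fixpoint hasSO (al : nat) (t : iterm) : bool :=
  match t with
  | ISO b => b == al
  | IVar _ | IZero => false
  | ISucc a => hasSO al a
  | IPlus a b => hasSO al a || hasSO al b
  | IFun _ ts => has (hasSO al) ts
  end.

Fixpoint subst (xi : nat -> iterm) (t : iterm) : iterm :=
  match t with
  | IVar j => IVar j
  | ISO b => xi b
  | IZero => IZero
  | ISucc a => ISucc (subst xi a)
  | IPlus a b => IPlus (subst xi a) (subst xi b)
  | IFun g ts => IFun g (map (subst xi) ts)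
  end.

Definition interp := nat -> seq nat -> nat.

Definition weakly_monotone (ar : nat -> nat) (J : interp) : Prop :=
  forall g (xs ys : seq nat), size xs = ar g -> size ys = ar g ->
    all2 leq xs ys -> J g xs <= J g ys.

(* [a]^beta_J ; second-order variables (never present after applying a
   second-order substitution) are given the dummy value 0. *)
Fixpoint eval (J : interp) (beta : nat -> nat) (t : iterm) : nat :=
  match t with
  | IVar j => beta j
  | ISO _ => 0
  | IZero => 0
  | ISucc a => (eval J beta a).+1
  | IPlus a b => eval J beta a + eval J beta b
  | IFun g ts => J g (map (eval J beta) ts)
  end.

Definition leJ (J : interp) (a b : iterm) : Prop :=
  forall beta : nat -> nat, eval J beta a <= eval J beta b.

Inductive constr : Type :=
| Ineq of iterm & iterm
| NotOcc of nat & nat.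

Definition socp := seq constr.

Definition wf_socp (ar : nat -> nat) (Phi : socp) : Prop :=
  forall a b, List.In (Ineq a b) Phi -> wf ar a /\ wf ar b.

Definition so_subst (ar : nat -> nat) (xi : nat -> iterm) : Prop :=
  forall al, wf ar (xi al) /\ (forall b, ~~ hasSO b (xi al)).

Definition is_model (J : interp) (xi : nat -> iterm) (Phi : socp) : Prop :=
  (forall a b, List.In (Ineq a b) Phi -> leJ J (subst xi a) (subst xi b)) /\
  (forall i al, List.In (NotOcc i al) Phi -> ~~ hasVar i (xi al)).

Definition occurs_in (al : nat) (Phi : socp) : Prop :=
  (exists a b, List.In (Ineq a b) Phi /\ (hasSO al a || hasSO al b)) \/
  (exists i, List.In (NotOcc i al) Phi).

(* V(beta): least sets with  Var(a) <= V(beta) and V(alpha) <= V(beta) for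
   alpha in SOVar(a), whenever (a <= b) in Phi and beta in SOVar(b). *)
Inductive inV (Phi : socp) : nat -> nat -> Prop :=
| inV_var a b i be :
    List.In (Ineq a b) Phi -> hasSO be b -> hasVar i a -> inV Phi i be
| inV_so a b i al be :
    List.In (Ineq a b) Phi -> hasSO be b -> hasSO al a -> inV Phi i al ->
    inV Phi i be.

Definition inSV (Phi : socp) (i be : nat) : Prop :=
  inV Phi i be /\ ~ List.In (NotOcc i be) Phi.

(* Main.v *)
Require Import Defs.
From mathcomp Require Import all_boot.
From Stdlib Require Import ClassicalEpsilon.
Set Implicit Arguments.
Unset Strict Implicit.

Definition iterm_ind' (P : iterm -> Prop) (HV : forall n, P (IVar n))
  (HS : forall n, P (ISO n)) (HZ : P IZero) (HSu : forall a, P a -> P (ISucc a))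
  (HP : forall a b, P a -> P b -> P (IPlus a b))
  (HF : forall g ts, (forall t, List.In t ts -> P t) -> P (IFun g ts)) :
  forall t, P t :=
  fix F t := match t with
  | IVar n => HV n | ISO n => HS n | IZero => HZ
  | ISucc a => HSu a (F a) | IPlus a b => HP a b (F a) (F b)
  | IFun g ts => HF g ts
      ((fix G (us : seq iterm) : forall t, List.In t us -> P t :=
         match us with
         | nil => fun t H => False_ind _ H
         | cons u us' => fun t H => match H with
             | or_introl e => eq_ind u P (F u) t e
             | or_intror h => G us' t h end
         end) ts)
  end.

Section Lists.
Variables (T U : Type).
Lemma map_ext_In (f g : T -> U) s : (forall t, List.In t s -> f t = g t) -> map f s = map g s.
Proof. elim: s => //= x s IH H; rewrite H ?IH //; auto. Qed.
Lemma all_ext_In (p q : pred T) s : (forall t, List.In t s -> p t = q t) -> all p s = all q s.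
Proof. elim: s => //= x s IH H; rewrite H ?IH //; auto. Qed.
Lemma has_ext_In (p q : pred T) s : (forall t, List.In t s -> p t = q t) -> has p s = has q s.
Proof. elim: s => //= x s IH H; rewrite H ?IH //; auto. Qed.
Lemma all_In (p : pred T) s t : all p s -> List.In t s -> p t.
Proof. elim: s => //= x s IH /andP[px ps] [<-|h]; auto. Qed.
Lemma has_In (p : pred T) s t : List.In t s -> p t -> has p s.
Proof. elim: s => //= x s IH [<-|h] pt; first by rewrite pt. by rewrite IH ?orbT. Qed.
Lemma In_has (p : pred T) s : has p s -> exists t, List.In t s /\ p t.
Proof.
  elim: s => //= x s IH /orP[px|/IH [t [h1 h2]]]; [exists x|exists t]; auto.
Qed.
Lemma all2_map (f g : T -> nat) s : (forall t, List.In t s -> f t <= g t) ->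
  all2 leq (map f s) (map g s).
Proof. elim: s => //= x s IH H; rewrite H ?IH //; auto. Qed.
End Lists.

Fixpoint zero (P : nat -> bool) (t : iterm) : iterm :=
  match t with
  | IVar j => if P j then IVar j else IZero
  | ISO b => ISO b
  | IZero => IZero
  | ISucc a => ISucc (zero P a)
  | IPlus a b => IPlus (zero P a) (zero P b)
  | IFun g ts => IFun g (map (zero P) ts)
  end.

Lemma wf_zero ar P t : wf ar (zero P t) = wf ar t.
Proof.
  elim/iterm_ind': t => //=.
  - by move=> n; case: (P n).
  - by move=> a b -> ->.
  - move=> g ts IH; rewrite size_map all_map; congr (_ && _).
    by apply: all_ext_In => t h /=; apply: IH.
Qed.

Lemma hasSO_zero b P t : hasSO b (zero P t) = hasSO b t.
Proof.
  elim/iterm_ind': t => //=.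
  - by move=> n; case: (P n).
  - by move=> a c -> ->.
  - move=> g ts IH; rewrite has_map.
    by apply: has_ext_In => t h /=; apply: IH.
Qed.

Lemma hasVar_zero i P t : hasVar i (zero P t) = P i && hasVar i t.
Proof.
  elim/iterm_ind': t => //=.
  - move=> n; case Pn: (P n) => /=; case: (n =P i) => [<-|_]; by rewrite ?Pn ?andbF.
  - by move=> n; rewrite andbF.
  - by rewrite andbF.
  - by move=> a c -> ->; rewrite andb_orr.
  - move=> g ts IH; rewrite has_map.
    case Pi: (P i) => /=.
    + by apply: has_ext_In => t h /=; rewrite IH // Pi.
    + apply: negbTE; apply/negP => /In_has [t [h]] /=; rewrite IH // Pi.
    by [].
Qed.

Lemma eval_zero J rho P t :
  eval J rho (zero P t) = eval J (fun i => if P i then rho i else 0) t.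
Proof.
  elim/iterm_ind': t => //=.
  - by move=> n; case: (P n).
  - by move=> a ->.
  - by move=> a c -> ->.
  - move=> g ts IH; rewrite -map_comp; congr (J g _).
    by apply: map_ext_In => t h /=; apply: IH.
Qed.

Lemma eval_subst_mono ar J (HJ : weakly_monotone ar J) rho1 rho2 x1 x2 t :
  wf ar t -> (forall i, hasVar i t -> rho1 i <= rho2 i) ->
  (forall al, hasSO al t -> eval J rho1 (x1 al) <= eval J rho2 (x2 al)) ->
  eval J rho1 (subst x1 t) <= eval J rho2 (subst x2 t).
Proof.
  elim/iterm_ind': t => /=.
  - by move=> n _ H _; apply: H; rewrite eqxx.
  - by move=> n _ _ H; apply: H; rewrite eqxx.
  - by [].
  - by move=> a IH w Hv Hs; rewrite ltnS; apply: IH.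
  - move=> a b IHa IHb /andP[wa wb] Hv Hs; apply: leq_add.
    + by apply: IHa => // [i h|al h]; [apply: Hv|apply: Hs]; rewrite h.
    + by apply: IHb => // [i h|al h]; [apply: Hv|apply: Hs]; rewrite h orbT.
  - move=> g ts IH /andP[/eqP sz wts] Hv Hs; rewrite -!map_comp.
    apply: HJ; rewrite ?size_map //.
    apply: all2_map => t h /=; apply: IH => //.
    + exact: (all_In wts h).
    + by move=> i hi; apply: Hv; apply: has_In h hi.
    + by move=> al hi; apply: Hs; apply: has_In h hi.
Qed.

Lemma eval_mono ar J (HJ : weakly_monotone ar J) rho1 rho2 t :
  wf ar t -> (forall i, hasVar i t -> rho1 i <= rho2 i) ->
  eval J rho1 t <= eval J rho2 t.
Proof.
  elim/iterm_ind': t => /=.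
  - by move=> n _ H; apply: H; rewrite eqxx.
  - by [].
  - by [].
  - by move=> a IH w Hv; rewrite ltnS; apply: IH.
  - move=> a b IHa IHb /andP[wa wb] Hv; apply: leq_add.
    + by apply: IHa => // i h; apply: Hv; rewrite h.
    + by apply: IHb => // i h; apply: Hv; rewrite h orbT.
  - move=> g ts IH /andP[/eqP sz wts] Hv.
    apply: HJ; rewrite ?size_map //.
    apply: all2_map => t h /=; apply: IH => //.
    + exact: (all_In wts h).
    + by move=> i hi; apply: Hv; apply: has_In h hi.
Qed.

Definition dec (Q : Prop) : bool :=
  if excluded_middle_informative Q then true else false.
Lemma decP (Q : Prop) : dec Q = true <-> Q.
Proof. by rewrite /dec; case: excluded_middle_informative. Qed.

Theorem mainTheorem10 (ar : nat -> nat) (J : interp) (Phi : socp)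
    (xi : nat -> iterm) :
  weakly_monotone ar J ->
  wf_socp ar Phi ->
  so_subst ar xi ->
  is_model J xi Phi ->
  exists xr : nat -> iterm,
    so_subst ar xr /\ is_model J xr Phi /\
    (forall al, occurs_in al Phi ->
       forall i, hasVar i (xr al) -> inSV Phi i al).
Proof.
  move=> HJ Hwf Hxi [Hm1 Hm2].
  pose P al := fun i => dec (inSV Phi i al).
  exists (fun al => zero (P al) (xi al)); split; [|split].
  - move=> al; have [w nso] := Hxi al; split; first by rewrite wf_zero.
    by move=> b; rewrite hasSO_zero.
  - split.
    + move=> a b hab rho.
      have [wa wb] := Hwf a b hab.
      pose sig i := if dec (forall be, hasSO be b -> inV Phi i be) then rho i else 0.
      apply: (@leq_trans (eval J sig (subst xi a))).
      { apply: (eval_subst_mono HJ) => //.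
        - move=> i hi; rewrite /sig.
          have -> : dec (forall be, hasSO be b -> inV Phi i be) = true.
            by apply/decP => be hb; apply: inV_var hab hb hi.
          by [].
        - move=> al hal; rewrite eval_zero.
          apply: (eval_mono HJ); first by have [] := Hxi al.
          move=> i _; rewrite /P /sig.
          case E: (dec (inSV Phi i al)) => //.
          move/decP: E => [hv _].
          have -> : dec (forall be, hasSO be b -> inV Phi i be) = true.
            by apply/decP => be hb; apply: inV_so hab hb hal hv.
          by []. }
      apply: (@leq_trans (eval J sig (subst xi b))); first exact: Hm1.
      apply: (eval_subst_mono HJ) => //.
      * by move=> i _; rewrite /sig; case: dec.
      * move=> be hbe; rewrite eval_zero.
        apply: (eval_mono HJ); first by have [] := Hxi be.
        move=> i hi; rewrite /P /sig.
        case E: (dec (forall be0, hasSO be0 b -> inV Phi i be0)) => //.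
        move/decP: E => E.
        have -> : dec (inSV Phi i be) = true.
          apply/decP; split; first exact: E.
          by move=> hn; move: (Hm2 _ _ hn); rewrite hi.
        by [].
    + move=> i al hin; rewrite hasVar_zero.
      by rewrite (negbTE (Hm2 _ _ hin)) andbF.
  - move=> al _ i; rewrite hasVar_zero => /andP[/decP h _]; exact: h.
Qed.
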